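(* Let $I\subseteq\mathbb R$ be an interval, $\lambda$ a positive measure on $(I\times\mathbb R^d,\mathcal B(I\times\mathbb R^d))$, $p\in[1,\infty)$, and for each $l\in\mathbb N$ let $G^{(l)}:(I\times\mathbb R^d)^2\to[0,\infty)$ be measurable with $G^{(l)}(t,x;s,y)=0$ whenever $s>t$. Let $f\in L^\infty_I$ be positive and assume $\theta:=\sup_{(t,x)\in I\times\mathbb R^d}\sum_{l=1}^\infty\big(\int_I\int_{\mathbb R^d}G^{(l)}(t,x;s,y)\lambda(ds,dy)\big)^{1/p}<\infty$. Let $\gamma\in(0,1)$ and let $v\ge0$ be a function with $v\in L^\infty_{I_T}$ for every $T\in I$ satisfying $v(t,x)\le f(t,x)+\big(\sum_{l=1}^\infty\int_I\int_{\mathbb R^d}G^{(l)}(t,x;s,y)v(s,y)^{p\gamma}\lambda(ds,dy)\big)^{1/p}$ for all $(t,x)\in I\times\mathbb R^d$. Then $v\in L^\infty_I$ and $\|v\|_{L^\infty_I}\le a$, where $a$ is the unique strictly positive solution of $a-\|f\|_{L^\infty_I}-\theta a^\gamma=0$.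
   Context: $I_T:=I\cap(-\infty,T]$. For $J\subseteq I$, $L^\infty_J$ is the space of measurable $f:J\times\mathbb R^d\to\mathbb R$ with $\|f\|_{L^\infty_J}:=\sup_{(t,x)\in J\times\mathbb R^d}|f(t,x)|<\infty$. ''Positive'' means $\ge0$. *)

(* Defs.v *)
From HB Require Import structures.
From mathcomp Require Import all_boot all_order all_algebra.
From mathcomp Require Import all_classical all_reals all_analysis.
Set Implicit Arguments. Unset Strict Implicit. Unset Printing Implicit Defensive.
Import Order.TTheory GRing.Theory Num.Theory.
Local Open Scope classical_set_scope.
Local Open Scope ring_scope.

(* R^d is modelled as [d.-tuple R] with its
   product sigma-algebra (= Borel sigma-algebra of R^d); a point (t,x) of
   R x R^d has type [(R * d.-tuple R)%type]. *)

Definition ptsp (R : realType) (d : nat) := (R * d.-tuple R)%type.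

Definition slab (R : realType) (d : nat) (I : interval R) : set (ptsp R d) :=
  [set z | z.1 \in I].

Definition slab_upto (R : realType) (d : nat) (I : interval R) (T : R)
  : set (ptsp R d) :=
  [set z | z.1 \in I /\ z.1 <= T].

Definition Linf (R : realType) (d : nat) (J : set (ptsp R d))
    (g : ptsp R d -> R) : Prop :=
  measurable_fun J g /\ exists M : R, forall z, J z -> `|g z| <= M.

Definition normLinf (R : realType) (d : nat) (J : set (ptsp R d))
    (g : ptsp R d -> R) : \bar R :=
  ereal_sup [set (`|g z|)%:E | z in J].

Arguments slab {R} d I _.
Arguments slab_upto {R} d I T _.
Arguments Linf {R d} J g.
Arguments normLinf {R d} J g.

(* Main.v *)
Require Import Defs.
From HB Require Import structures.
From mathcomp Require Import all_boot all_order all_algebra.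
From mathcomp Require Import all_classical all_reals all_analysis.
From mathcomp Require Import ring lra.
From mathcomp Require Import measurable_realfun.
Import Order.TTheory GRing.Theory Num.Theory.
Local Open Scope classical_set_scope.
Local Open Scope ring_scope.

Lemma le_int_nomeas d' (T : measurableType d') (R : realType)
  (mu : {measure set T -> \bar R}) (D : set T) (f g : T -> \bar R) :
  (forall x, D x -> (0 <= f x)%E) -> (forall x, D x -> (f x <= g x)%E) ->
  (\int[mu]_(x in D) f x <= \int[mu]_(x in D) g x)%E.
Proof.
move=> f0 fg.
have g0 : forall x, D x -> (0 <= g x)%E by move=> x Dx; exact: le_trans (f0 _ Dx) (fg _ Dx).
rewrite (ge0_integralE mu f0) (ge0_integralE mu g0) /=.
apply: ereal_sup_le => _ [h hf <-]; exists h => // x.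
apply: (le_trans (hf x)); rewrite /patch; case: ifP => // /[1!inE] Dx; exact: fg.
Qed.

Lemma mfst (R : realType) (d : nat) (B : set R) : measurable B ->
  measurable [set z : ptsp R d | B z.1].
Proof.
move=> mB; have := @measurable_fst _ _ R (d.-tuple R) measurableT B mB; rewrite setTI.
by [].
Qed.

Lemma slab_meas (R : realType) (d : nat) (I : interval R) : measurable (slab d I).
Proof. have := @mfst R d _ (measurable_itv I); by []. Qed.

Lemma slab_upto_meas (R : realType) (d : nat) (I : interval R) T :
  measurable (slab_upto d I T).
Proof.
have -> : slab_upto d I T = [set z : ptsp R d | ([set` I] `&` [set` `]-oo, T]]) z.1].
  apply/seteqP; split => z /= [Iz zT]; split => //.
apply: mfst; apply: measurableI; exact: measurable_itv.
Qed.

Lemma root_bound (R : realType) (F th g a M : R) : 0 <= F -> 0 <= th -> 0 < g < 1 ->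
  0 < a -> a - F - th * a `^ g = 0 -> 0 <= M -> M <= F + th * M `^ g -> M <= a.
Proof.
move=> F0 th0 /andP[g0 g1] a0 ha M0 hM.
rewrite leNgt; apply/negP => aM.
have Mpos : 0 < M by exact: lt_trans a0 aM.
set t := a / M.
have t0 : 0 < t by rewrite divr_gt0.
have t1 : t < 1 by rewrite ltr_pdivrMr // mul1r.
have aE : a = t * M by rewrite /t divfK // gt_eqF.
have tg : t < t `^ g.
  have tE : t = t `^ g * t `^ (1 - g).
    rewrite -powRD; last by rewrite (gt_eqF t0) implybT.
    by rewrite addrC subrK powRr1 // ltW.
  rewrite [X in X < _]tE gtr_pMr ?powR_gt0 //.
  have := @gt0_ltr_powR R (1 - g) _ t 1; rewrite powR1; apply.
  - by rewrite subr_gt0.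
  - by rewrite nnegrE ltW.
  - by rewrite nnegrE.
  - by [].
have aeq : th * a `^ g = t `^ g * (th * M `^ g).
  by rewrite aE powRM ?ltW // mulrCA.
have X0 : 0 <= th * M `^ g by rewrite mulr_ge0 // powR_ge0.
set X := th * M `^ g in aeq X0 hM.
set u := t `^ g in aeq tg.
have h1 : a <= t * F + t * X.
  by rewrite aE -mulrDr ler_pM2l.
have h2 : a = F + u * X by rewrite -aeq; lra.
have h3 : (1 - t) * F + (u - t) * X <= 0.
  have : F + u * X <= t * F + t * X by rewrite -h2.
  rewrite mulrBl mulrBl mul1r; lra.
have h4 : 0 <= (1 - t) * F by rewrite mulr_ge0 // subr_ge0 ltW.
have h5 : 0 <= (u - t) * X by rewrite mulr_ge0 // subr_ge0 ltW.
have hF : (1 - t) * F = 0 by lra.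
have hX : (u - t) * X = 0 by lra.
have F00 : F = 0.
  by move/eqP: hF; rewrite mulf_eq0 subr_eq0 (gt_eqF t1) /= => /eqP.
have X00 : X = 0.
  by move/eqP: hX; rewrite mulf_eq0 subr_eq0 (gt_eqF tg) /= => /eqP.
by move: h2; rewrite F00 X00; lra.
Qed.

Lemma crude_bound (R : realType) (F th g M : R) : 0 <= F -> 0 <= th -> 0 < g < 1 ->
  0 <= M -> M <= F + th * M `^ g -> M <= 1 + (F + th) `^ (1 - g)^-1.
Proof.
move=> F0 th0 /andP[g0 g1] M0 hM.
have [M1|M1] := leP M 1.
  by rewrite ler_wpDr // powR_ge0.
have Mpos : 0 < M by exact: lt_trans ltr01 M1.
have Mg1 : 1 <= M `^ g.
  have := @ge0_ler_powR R g (ltW g0) 1 M; rewrite powR1; apply => //.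
  - by rewrite nnegrE.
  - by rewrite ltW.
have g1' : 0 < 1 - g by rewrite subr_gt0.
have ME : M = M `^ g * M `^ (1 - g).
  rewrite -powRD; last by rewrite (gt_eqF Mpos) implybT.
  by rewrite addrC subrK powRr1 // ltW.
have h1 : M `^ g * M `^ (1 - g) <= M `^ g * (F + th).
  rewrite -ME (le_trans hM) // mulrDr; apply: lerD; first exact: ler_peMl.
  by rewrite mulrC.
have h2 : M `^ (1 - g) <= F + th.
  by move: h1; rewrite ler_pM2l // (lt_le_trans ltr01 Mg1).
rewrite ler_wpDl //.
have -> : M = (M `^ (1 - g)) `^ (1 - g)^-1.
  by rewrite -powRrM mulfV ?gt_eqF // powRr1.
apply: ge0_ler_powR => //.
- by rewrite invr_ge0 ltW.
- by rewrite nnegrE powR_ge0.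
- by rewrite nnegrE addr_ge0.
Qed.

Lemma powR_superadd (R : realType) (p x y : R) : 1 <= p -> 0 <= x -> 0 <= y ->
  x `^ p + y `^ p <= (x + y) `^ p.
Proof.
move=> p1 x0 y0.
have p0 : p != 0 by rewrite gt_eqF // (lt_le_trans ltr01 p1).
have [s0|s0] := eqVneq (x + y) 0.
  have xz : x = 0 by lra.
  have yz : y = 0 by lra.
  by rewrite xz yz addr0 !powR0 // addr0.
have sp : 0 < x + y by rewrite lt_def s0 addr_ge0.
have key z : 0 <= z -> z <= x + y -> z `^ p <= (x + y) `^ p * (z / (x + y)).
  move=> z0 zs.
  set u := z / (x + y).
  have zE : z = (x + y) * u by rewrite /u mulrC divfK.
  have u0 : 0 <= u by rewrite divr_ge0 // ltW.
  rewrite {1}zE powRM ?addr_ge0 //.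
  rewrite ler_pM2l ?powR_gt0 //.
  have [->|zn0] := eqVneq u 0; first by rewrite powR0.
  apply: ge1r_powR => //; rewrite lt_def zn0 u0 /=.
  by rewrite /u ler_pdivrMr // mul1r.
apply: (le_trans (lerD (key x x0 _) (key y y0 _))); [lra|lra|].
by rewrite -mulrDr -mulrDl divff // mulr1.
Qed.

Section ES.
Local Open Scope ereal_scope.

Lemma poweR_superadd (R : realType) (p : R) (x y : \bar R) : (1 <= p)%R -> 0 <= x -> 0 <= y ->
  x `^ p + y `^ p <= (x + y) `^ p.
Proof.
move=> p1 x0 y0.
have p0 : p != 0%R by rewrite gt_eqF // (lt_le_trans ltr01 p1).
case: x x0 => [x| |] //; case: y y0 => [y| |] //.
- by move=> y0 x0; rewrite !poweR_EFin -EFinD lee_fin powR_superadd.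
- by move=> _ x0; rewrite addey // poweRyr // leey.
- by move=> y0 _; rewrite addye // poweRyr // leey.
- by move=> _ _; rewrite addye // poweRyr // leey.
Qed.

Lemma sum_superadd (R : realType) (p : R) (I : Type) (s : seq I) (c : I -> \bar R) :
  (1 <= p)%R -> (forall i, 0 <= c i) ->
  \sum_(i <- s) c i `^ p <= (\sum_(i <- s) c i) `^ p.
Proof.
move=> p1 c0; elim: s => [|i s IH].
  by rewrite !big_nil poweR0r // gt_eqF // (lt_le_trans ltr01 p1).
have S0 : 0 <= \sum_(j <- s) c j by apply: sume_ge0 => j _; exact: c0.
rewrite !big_cons; apply: (le_trans _ (@poweR_superadd R p _ _ p1 (c0 i) S0)).
by rewrite leeD2l.
Qed.

Lemma in0y (R : realType) (x : \bar R) : 0 <= x -> x \in `[0, +oo].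
Proof. by move=> x0; rewrite in_itv /= x0 leey. Qed.

Lemma series_subadd (R : realType) (p : R) (A : nat -> \bar R) :
  (1 <= p)%R -> (forall l, 0 <= A l) ->
  (\sum_(1 <= l <oo) A l) `^ p^-1 <= \sum_(1 <= l <oo) (A l `^ p^-1).
Proof.
move=> p1 A0.
have p0 : (0 < p)%R by exact: lt_le_trans ltr01 p1.
set B := \sum_(1 <= l <oo) (A l `^ p^-1).
have B0 : 0 <= B by apply: nneseries_ge0 => n _ _; exact: poweR_ge0.
have SA0 : 0 <= \sum_(1 <= l <oo) A l by apply: nneseries_ge0 => n _ _; exact: A0.
have claim : \sum_(1 <= l <oo) A l <= B `^ p.
  apply: lime_le; first by apply: is_cvg_nneseries => n _ _; exact: A0.
  near=> n.
  have -> : \sum_(1 <= l < n) A l = \sum_(1 <= l < n) ((A l `^ p^-1) `^ p).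
    apply: eq_bigr => l _; rewrite -poweRrM mulVf ?gt_eqF // poweRe1 //.
  apply: (le_trans (@sum_superadd R p _ _ _ p1 (fun l => poweR_ge0 _ _))).
  apply: gt0_ler_poweR; first exact: ltW.
  - apply: in0y; apply: sume_ge0 => l _; exact: poweR_ge0.
  - exact: in0y.
  - by apply: nneseries_lim_ge => l _ _; exact: poweR_ge0.
apply: (@le_trans _ _ ((B `^ p) `^ p^-1)).
  apply: gt0_ler_poweR => //.
  - by rewrite invr_ge0 ltW.
  - exact: in0y.
  - exact/in0y/poweR_ge0.
by rewrite -poweRrM mulfV ?gt_eqF // poweRe1.
Unshelve. all: by end_near.
Qed.

End ES.

Lemma v_meas (R : realType) (d : nat) (I : interval R) (v : ptsp R d -> R) :
  (forall T, T \in I -> Linf (slab_upto d I T) v) -> measurable_fun (slab d I) v.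
Proof.
move=> hvT.
pose maxP := [set m : R | m \in I /\ forall y, y \in I -> y <= m].
pose tn (n : nat) : R := match n with
  | 0%N => xget 0 maxP
  | n'.+1 => match (@unpickle rat n') with Some q => ratr q | None => 0 end end.
pose E (n : nat) : set (ptsp R d) :=
  if tn n \in I then slab_upto d I (tn n) else set0.
have mE n : measurable (E n).
  by rewrite /E; case: ifP => _; [exact: slab_upto_meas|exact: measurable0].
have SE : slab d I = \bigcup_n E n.
  apply/seteqP; split => z; last first.
    by move=> [n _]; rewrite /E; case: ifP => // _ [].
  move=> Sz.
  have [[m Pm]|nomax] := pselect (exists m, maxP m).
    exists 0%N => //; rewrite /E.
    have := xgetPex 0 (ex_intro _ m Pm); rewrite -/(tn 0%N) => -[tI tmax].
    by rewrite tI; split => //; apply: tmax.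
  have [y Iy zy] : exists2 y, y \in I & z.1 < y.
    apply: contra_notP nomax => H; exists z.1; split => // y Iy.
    by rewrite leNgt; apply/negP => zy; apply: H; exists y.
  have [q qin] := rat_in_itvoo zy.
  move: qin; rewrite in_itv /= => /andP[zq qy].
  have qI : ratr q \in I.
    have := @interval_is_interval R I z.1 y Sz Iy (ratr q).
    by rewrite (ltW zq) (ltW qy) => /(_ isT).
  exists (pickle q).+1 => //; rewrite /E /tn pickleK qI.
  by split => //; exact: ltW.
rewrite SE; apply/measurable_fun_bigcup => // n.
rewrite /E; case: ifP => [tI|_]; first exact: (hvT _ tI).1.
exact: measurable_fun_set0.
Qed.

Theorem mainTheorem13 (R : realType) (d : nat) (I : interval R)
  (lam : {measure set (ptsp R d) -> \bar R}) (p : R)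
  (G : nat -> ptsp R d -> ptsp R d -> R) (f v : ptsp R d -> R) (gamma : R) :
  1 <= p ->
  (forall l, measurable_fun [set: ptsp R d * ptsp R d]
               (fun zw => G l zw.1 zw.2)) ->
  (forall l z w, 0 <= G l z w) ->
  (forall l z w, w.1 > z.1 -> G l z w = 0) ->
  Linf (slab d I) f ->
  (forall z, slab d I z -> 0 <= f z) ->
  (ereal_sup [set (\sum_(1 <= l <oo)
        (\int[lam]_(w in slab d I) (G l z w)%:E) `^ p^-1)%E
      | z in slab d I] < +oo)%E ->
  0 < gamma < 1 ->
  (forall z, slab d I z -> 0 <= v z) ->
  (forall T, T \in I -> Linf (slab_upto d I T) v) ->
  (forall z, slab d I z ->
     ((v z)%:E <= (f z)%:E + (\sum_(1 <= l <oo)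
        \int[lam]_(w in slab d I) (G l z w * v w `^ (p * gamma))%:E)
        `^ p^-1)%E) ->
  let theta := fine (ereal_sup [set (\sum_(1 <= l <oo)
        (\int[lam]_(w in slab d I) (G l z w)%:E) `^ p^-1)%E
      | z in slab d I]) in
  Linf (slab d I) v /\
  (forall a : R, 0 < a ->
     a - fine (normLinf (slab d I) f) - theta * a `^ gamma = 0 ->
     (normLinf (slab d I) v <= a%:E)%E).
Proof.
move=> p1 hGm hG0 hGc hf hf0 hth hg hv0 hvT hv theta.
have p0 : 0 < p by exact: lt_le_trans ltr01 p1.
have /andP[g0 g1] := hg.
set S := slab d I.
have mS : measurable S by exact: slab_meas.
set Phi := fun z => (\sum_(1 <= l <oo)
        (\int[lam]_(w in S) (G l z w)%:E) `^ p^-1)%E.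
have Phi0 z : (0 <= Phi z)%E.
  by apply: nneseries_ge0 => n _ _; exact: poweR_ge0.
have thE z : S z -> (0 <= theta) /\ (Phi z <= theta%:E)%E.
  move=> Sz.
  have le1 : (Phi z <= ereal_sup [set Phi z | z in S])%E.
    by apply: ereal_sup_ubound; exists z.
  have fin : ereal_sup [set Phi z | z in S] \is a fin_num.
    rewrite ge0_fin_numE; first exact: hth.
    exact: le_trans (Phi0 z) le1.
  rewrite /theta -/Phi (fineK fin); split => //.
  by rewrite -lee_fin (fineK fin); exact: le_trans (Phi0 z) le1.
set F := fine (normLinf S f).
have FE z : S z -> (0 <= F) /\ f z <= F.
  move=> Sz; have [_ [Mf hMf]] := hf.
  have le1 : ((`|f z|)%:E <= normLinf S f)%E.
    by apply: ereal_sup_ubound; exists z.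
  have fin : normLinf S f \is a fin_num.
    rewrite ge0_fin_numE; last exact: le_trans le1.
    apply: (@le_lt_trans _ _ Mf%:E); last exact: ltry.
    by apply: ge_ereal_sup => _ [w Sw <-]; rewrite lee_fin hMf.
  have : ((`|f z|)%:E <= F%:E)%E by rewrite /F fineK.
  rewrite lee_fin => h; split; first exact: le_trans (normr_ge0 _) h.
  exact: le_trans (ler_norm _) h.
have core T (TI : T \in I) (M : R) (M0 : 0 <= M)
    (hM : forall w, slab_upto d I T w -> v w <= M) :
    forall z, slab_upto d I T z -> v z <= F + theta * M `^ gamma.
  move=> z [zI zT].
  have Sz : S z by [].
  have [th0 thz] := thE z Sz.
  have [F0 fz] := FE z Sz.
  set A := fun l => (\int[lam]_(w in S) (G l z w)%:E)%E.
  have A0 l : (0 <= A l)%E by apply: integral_ge0 => w _; rewrite lee_fin.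
  set k := M `^ (p * gamma).
  have k0 : 0 <= k by exact: powR_ge0.
  have step1 l : (\int[lam]_(w in S) (G l z w * v w `^ (p * gamma))%:E
                  <= k%:E * A l)%E.
    apply: (@le_trans _ _ (\int[lam]_(w in S) ((G l z w)%:E * k%:E))%E).
      apply: le_int_nomeas.
        by move=> w _; rewrite lee_fin mulr_ge0 // powR_ge0.
      move=> w Sw; rewrite -EFinM lee_fin.
      have [zw|wz] := ltP z.1 w.1; first by rewrite hGc // !mul0r.
      apply: ler_wpM2l => //.
      have Uw : slab_upto d I T w by split => //; exact: le_trans wz zT.
      apply: ge0_ler_powR => //.
      - by rewrite mulr_ge0 // ltW.
      - by rewrite nnegrE hv0.
      - exact: hM.
    rewrite ge0_integralZr //; first by rewrite muleC.
    - have hm : measurable_fun S (fun w => G l z w).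
        apply: (measurable_funS measurableT) => //.
        exact: measurableT_comp (hGm l) (pair1_measurable z).
      have := measurableT_comp (@EFin_measurable R setT) hm.
      exact.
    - by move=> w _; rewrite lee_fin.
  have step2 : (\sum_(1 <= l <oo)
        \int[lam]_(w in S) (G l z w * v w `^ (p * gamma))%:E <=
        k%:E * \sum_(1 <= l <oo) A l)%E.
    rewrite -nneseriesZl; last by move=> l _.
    apply: lee_nneseries; last by move=> l _; exact: step1.
    move=> l _ _.
    by apply: integral_ge0 => w _; rewrite lee_fin mulr_ge0 // powR_ge0.
  have step3 : ((\sum_(1 <= l <oo)
        \int[lam]_(w in S) (G l z w * v w `^ (p * gamma))%:E) `^ p^-1 <=
        (M `^ gamma)%:E * theta%:E)%E.
    apply: (@le_trans _ _ ((k%:E * \sum_(1 <= l <oo) A l) `^ p^-1)%E).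
      apply: gt0_ler_poweR => //.
      - by rewrite invr_ge0 ltW.
      - apply: in0y; apply: nneseries_ge0 => l _ _.
        by apply: integral_ge0 => w _; rewrite lee_fin mulr_ge0 // powR_ge0.
      - apply: in0y; apply: mule_ge0; first by rewrite lee_fin.
        by apply: nneseries_ge0 => l _ _.
    rewrite poweRM ?lee_fin //; last by apply: nneseries_ge0 => l _ _.
    have -> : ((k%:E) `^ p^-1 = (M `^ gamma)%:E)%E.
      by rewrite poweR_EFin /k -powRrM mulrAC divff ?gt_eqF // mul1r.
    apply: lee_wpmul2l; first by rewrite lee_fin powR_ge0.
    apply: le_trans thz.
    exact: series_subadd.
  have := hv z Sz.
  move/le_trans => /(_ _ (leeD2l _ step3)).
  rewrite -EFinM -EFinD lee_fin => h.
  by apply: (le_trans h); rewrite (mulrC theta) lerD2r.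
have exM z : S z -> exists M, [/\ 0 <= M, M <= F + theta * M `^ gamma & v z <= M].
  move=> Sz; set T := z.1.
  have TI : T \in I := Sz.
  have [_ [Mb hMb]] := hvT T TI.
  set E := [set v w | w in slab_upto d I T].
  have Uz : slab_upto d I T z by split.
  have En : E !=set0 by exists (v z), z.
  have Eub : has_ubound E.
    by exists Mb => _ [w Uw <-]; exact: le_trans (ler_norm _) (hMb w Uw).
  have supub := ub_le_sup Eub.
  have vle w : slab_upto d I T w -> v w <= sup E.
    by move=> Uw; apply: supub; exists w.
  have M0 : 0 <= sup E by exact: le_trans (hv0 z Sz) (vle z Uz).
  exists (sup E); split => //; last exact: vle.
  apply: ge_sup => // _ [w Uw <-]; exact: (core T TI (sup E) M0 vle w Uw).
split.
  split; first exact: v_meas.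
  case: (pselect (exists z, S z)) => [[z0 Sz0]|nz]; last first.
    by exists 0 => z Sz; exfalso; apply: nz; exists z.
  have [F0 _] := FE z0 Sz0; have [th0 _] := thE z0 Sz0.
  exists (1 + (F + theta) `^ (1 - gamma)^-1) => z Sz.
  have [M [M0 hM vM]] := exM z Sz.
  rewrite ger0_norm ?hv0 //; apply: (le_trans vM).
  exact: (@crude_bound _ _ _ _ _ F0 th0 hg M0 hM).
move=> a a0 ha; apply: ge_ereal_sup => _ [z Sz <-].
have [F0 _] := FE z Sz; have [th0 _] := thE z Sz.
have [M [M0 hM vM]] := exM z Sz.
rewrite lee_fin ger0_norm ?hv0 //; apply: (le_trans vM).
exact: (@root_bound _ _ _ _ _ _ F0 th0 hg a0 ha M0 hM).
Qed.
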